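(* Let $P$ be a positive opetope and $I$ the one-dimensional positive opetope. The $\iota$-maps $P\to I$ that are surjective on faces are in bijective correspondence with the $1$-faces of $P$ lying in $P_1-\gamma(P_2)$.
   Context: A positive hypergraph $S$ consists of finite sets $S_k$ ($k\in\mathbb{N}$), only finitely many nonempty, functions $\gamma:S_{k+1}\to S_k$, and for each $k$ an assignment $\delta$ sending each $a\in S_{k+1}$ to a nonempty subset $\delta(a)\subseteq S_k$, with $\delta(a)$ a singleton for $a\in S_1$. A face is identified with its singleton; $\gamma(X)=\{\gamma(a):a\in X\}$, $\delta(X)=\bigcup_{a\in X}\delta(a)$. For $k>0$ the lower order $<^-$ on $S_k$ is the transitive closure of: $a\lhd b$ iff $\gamma(a)\in\delta(b)$. The upper order $<^+$ on $S_k$ is the transitive closure of: $a\lhd b$ iff there is $\alpha\in S_{k+1}$ with $a\in\delta(\alpha)$, $\gamma(\alpha)=b$; $a\perp^{\pm}b$ iff $a<^{\pm}b$ or $b<^{\pm}a$. A positive opetopic cardinal: $S_0\ne\emptyset$; globularity ($\gamma\gamma(a)=\gamma\delta(a)-\delta\delta(a)$, $\delta\gamma(a)=\delta\delta(a)-\gamma\delta(a)$ for $\dim a\ge2$); each $<^+$ a strict order, linear on $S_0$; for $k>0$, $\perp^-\cap\perp^+=\emptyset$ on $S_k$; for $x\in S_{k-1}$, $\{a:\gamma(a)=x\}$ and $\{a:x\in\delta(a)\}$ linearly ordered by $<^+$. A positive opetope: additionally $|P_m-\delta(P_{m+1})|\le1$ for all $m$. $\gamma^{(k)}(p)=p$ if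 $\dim p\le k$, else $\gamma^{(k)}(p)=\gamma(\gamma^{(k+1)}(p))$. An $\iota$-map $h:Q\to P$ of positive opetopes is a function on faces with: $\dim h(q)\le\dim q$; $h(\gamma^{(k)}(q))=\gamma^{(k)}(h(q))$ for $k\ge0$, $q\in Q_{k+1}$; and, with $\ker(h)=\{q:\dim q>\dim h(q)\}$, for $q\in Q_{k+1}$: if $\dim h(q)=k+1$, $h$ restricts to a bijection $\delta(q)-\ker(h)\to\delta(h(q))$; if $\dim h(q)=k$, to a bijection $\delta(q)-\ker(h)\to\{h(q)\}$; if $\dim h(q)<k$, $\delta(q)\subseteq\ker(h)$. $I$ denotes the positive opetope with $I_0=\{-,+\}$, $I_1=\{a\}$, $\delta(a)=\{-\}$, $\gamma(a)=+$, and no other faces. *)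

(* Defs.v *)
From HB Require Import structures.
From mathcomp Require Import all_boot.

Set Implicit Arguments.
Unset Strict Implicit.
Unset Printing Implicit Defensive.

(* A (candidate) positive hypergraph: a finite type of faces, each with a
   dimension; gam (codomain/target) and del (domain/source set) are only
   meaningful on faces of positive dimension, all definitions below only use
   them there. *)
Record hgraph := HGraph {
  face : finType;
  dim : face -> nat;
  gam : face -> face;
  del : face -> {set face}
}.

Section Defs.
Variable S : hgraph.
Implicit Types (a b x : face S) (X : {set face S}).

Definition faces_of (k : nat) : {set face S} := [set a | dim a == k].
Definition delS X : {set face S} := \bigcup_(a in X) del a.
Definition gamS X : {set face S} := (@gam S) @: X.

Definition is_hgraph : Prop :=
  forall a, 0 < dim a ->
    [/\ dim (gam a) = (dim a).-1,
        del a != set0,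
        {in del a, forall b, dim b = (dim a).-1} &
        (dim a = 1 -> #|del a| = 1)].

Definition tclos (r : rel (face S)) : rel (face S) :=
  fun a b => [exists c, r a c && connect r c b].

Definition lower_step : rel (face S) :=
  fun a b => [&& 0 < dim a, dim a == dim b & gam a \in del b].
Definition upper_step : rel (face S) :=
  fun a b => [exists al, [&& 0 < dim al, a \in del al & gam al == b]].

Definition lt_lower := tclos lower_step.
Definition lt_upper := tclos upper_step.
Definition perp (r : rel (face S)) : rel (face S) := fun a b => r a b || r b a.

Definition globular : Prop :=
  forall a, 2 <= dim a ->
    [set gam (gam a)] = gamS (del a) :\: delS (del a) /\
    del (gam a) = delS (del a) :\: gamS (del a).

Definition is_pos_opetopic_cardinal : Prop :=
  is_hgraph /\
  (exists a, dim a = 0) /\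
  globular /\
  [/\
      (* each <^+ is a strict order (transitive by construction) *)
      (forall a, ~~ lt_upper a a),
      (forall a b, dim a = 0 -> dim b = 0 -> a != b -> perp lt_upper a b),
      (forall a b, 0 < dim a -> dim a = dim b ->
          ~~ (perp lt_lower a b && perp lt_upper a b)) &
      (forall x a b, 0 < dim a -> 0 < dim b -> gam a = x -> gam b = x ->
          a != b -> perp lt_upper a b) /\
      (forall x a b, 0 < dim a -> 0 < dim b -> x \in del a -> x \in del b ->
          a != b -> perp lt_upper a b)].

Definition is_pos_opetope : Prop :=
  is_pos_opetopic_cardinal /\
  forall m, #|faces_of m :\: delS (faces_of m.+1)| <= 1.

(* gamma^(k)(p) = p if dim p <= k, else gamma(gamma^(k+1)(p)) *)
Definition gamk (k : nat) (p : face S) : face S := iter (dim p - k) (@gam S) p.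

Definition top1faces : {set face S} := faces_of 1 :\: gamS (faces_of 2).

End Defs.

Section Iota.
Variables Q P : hgraph.

Definition ker (h : face Q -> face P) : {set face Q} :=
  [set q | dim (h q) < dim q].

Definition is_iota_map (h : face Q -> face P) : Prop :=
  [/\ (forall q, dim (h q) <= dim q),
      (forall k q, dim q = k.+1 -> h (gamk k q) = gamk k (h q)) &
      (forall k q, dim q = k.+1 ->
         [/\ dim (h q) = k.+1 ->
               {in del q :\: ker h &, injective h} /\
               h @: (del q :\: ker h) = del (h q),
             dim (h q) = k ->
               {in del q :\: ker h &, injective h} /\
               h @: (del q :\: ker h) = [set h q] &
             dim (h q) < k -> del q \subset ker h])].

End Iota.

Definition Iface : finType := 'I_3.
Definition Iminus : Iface := inord 0.
Definition Iplus : Iface := inord 1.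
Definition Ia : Iface := inord 2.
Definition Idim (x : Iface) : nat := (x == Ia).
Definition Igam (x : Iface) : Iface := if x == Ia then Iplus else x.
Definition Idel (x : Iface) : {set Iface} := if x == Ia then [set Iminus] else set0.
Definition Ihg : hgraph := @HGraph Iface Idim Igam Idel.

(* Main.v *)
Require Import Defs.
From HB Require Import structures.
From mathcomp Require Import all_boot zify.
From Stdlib Require Import ProofIrrelevance FunctionalExtensionality.

Set Implicit Arguments.
Unset Strict Implicit.
Unset Printing Implicit Defensive.

Lemma connect_rect (T : finType) (r : rel T) (Q : T -> Prop) y :
  Q y -> (forall x z, r x z -> connect r z y -> Q z -> Q x) ->
  forall x, connect r x y -> Q x.
Proof.
move=> Qy IH x /connectP [p]; elim: p x => [|z p IHp] x /=; first by move=> _ <-.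
case/andP=> rxz pz Ey; apply: (IH x z rxz); last exact: IHp.
by apply/connectP; exists p.
Qed.

Lemma tclos_connect (S : hgraph) (r : rel (face S)) x y : tclos r x y -> connect r x y.
Proof.
by case/existsP=> c /andP [rxc cy]; apply: connect_trans (connect1 rxc) cy.
Qed.

Lemma tclos_step (S : hgraph) (r : rel (face S)) x y z : r x y -> connect r y z -> tclos r x z.
Proof. by move=> rxy cyz; apply/existsP; exists y; rewrite rxy. Qed.

Lemma tclos_trans (S : hgraph) (r : rel (face S)) x y z :
  tclos r x y -> tclos r y z -> tclos r x z.
Proof.
case/existsP=> c /andP [rxc ccy] /tclos_connect cyz.
by apply: tclos_step rxc (connect_trans ccy cyz).
Qed.

Lemma tclos1 (S : hgraph) (r : rel (face S)) x y : r x y -> tclos r x y.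
Proof. by move=> rxy; apply: tclos_step rxy (connect0 r y). Qed.

Lemma connect_tclos (S : hgraph) (r : rel (face S)) x y :
  connect r x y -> x = y \/ tclos r x y.
Proof.
case/connectP=> [[|z p]] /=; first by move=> _ ->; left.
case/andP=> rxz pz Ey; right; apply: tclos_step rxz _.
by apply/connectP; exists p.
Qed.

Lemma tclos_last (S : hgraph) (r : rel (face S)) x y : tclos r x y -> exists z, r z y.
Proof.
case/existsP=> c /andP [rxc /connectP [p pp Ey]].
move: pp Ey; case/lastP: p => [|p z] /=; first by move=> _ ->; exists x.
rewrite rcons_path last_rcons => /andP [_ rz] ->; by exists (last c p).
Qed.

Lemma vIm : nat_of_ord Iminus = 0. Proof. by rewrite /Iminus inordK. Qed.
Lemma vIp : nat_of_ord Iplus = 1. Proof. by rewrite /Iplus inordK. Qed.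
Lemma vIa : nat_of_ord Ia = 2. Proof. by rewrite /Ia inordK. Qed.
Lemma Imp : (Iminus == Iplus) = false. Proof. by rewrite -val_eqE /= vIm vIp. Qed.
Lemma Ima : (Iminus == Ia) = false. Proof. by rewrite -val_eqE /= vIm vIa. Qed.
Lemma Ipa : (Iplus == Ia) = false. Proof. by rewrite -val_eqE /= vIp vIa. Qed.
Lemma Icases (x : Iface) : [\/ x = Iminus, x = Iplus | x = Ia].
Proof.
case: x => [[|[|[|n]]] Hn].
- by constructor 1; apply/val_inj; rewrite /= vIm.
- by constructor 2; apply/val_inj; rewrite /= vIp.
- by constructor 3; apply/val_inj; rewrite /= vIa.
- by [].
Qed.

Lemma gamkI k (x : face Ihg) :
  gamk k x = if (k == 0) && (x == Ia) then Iplus else x.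
Proof.
rewrite /gamk /=; rewrite /Idim; case: (x =P Ia) => [->|_]; case: k => //=.
by rewrite /Igam eqxx.
Qed.

Lemma Idim_le1 (x : face Ihg) : dim x <= 1.
Proof. by rewrite /= /Idim leq_b1. Qed.

Lemma sig_eqP (A : Type) (Pr : A -> Prop) (u v : {x | Pr x}) :
  sval u = sval v -> u = v.
Proof.
case: u v => [x px] [y py] /= E; subst y; f_equal; apply: proof_irrelevance.
Qed.

Definition src (P : hgraph) (e : face P) : face P := odflt e [pick x in del e].
Definition le (P : hgraph) (x y : face P) := (x == y) || lt_upper x y.

Section Basic.
Lemma dim_gam P (Hg : is_hgraph P) (a : face P) : 0 < dim a -> dim (gam a) = (dim a).-1.
Proof. by move=> /Hg []. Qed.

Lemma dim_del P (Hg : is_hgraph P) (a b : face P) : 0 < dim a -> b \in del a -> dim b = (dim a).-1.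
Proof. by move=> /Hg [] _ _ H _ /H. Qed.

Lemma del_src P (Hg : is_hgraph P) (e : face P) : dim e = 1 -> del e = [set src e].
Proof.
move=> He; have := Hg e; rewrite He => /(_ isT) [] _ _ _ /(_ erefl) /eqP /cards1P [x Hx].
rewrite /src Hx; case: pickP => [y|]; first by rewrite inE => /eqP ->.
by move/(_ x); rewrite inE eqxx.
Qed.

Lemma src_in P (Hg : is_hgraph P) (e : face P) : dim e = 1 -> src e \in del e.
Proof. by move=> He; rewrite (del_src Hg He) set11. Qed.

Lemma dim_src P (Hg : is_hgraph P) (e : face P) : dim e = 1 -> dim (src e) = 0.
Proof. by move=> He; rewrite (dim_del Hg _ (src_in Hg He)) He. Qed.

Lemma dim_gam1 P (Hg : is_hgraph P) (e : face P) : dim e = 1 -> dim (gam e) = 0.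
Proof. by move=> He; rewrite (dim_gam Hg) He. Qed.

Lemma up_dim P (Hg : is_hgraph P) (x y : face P) : upper_step x y -> dim x = dim y.
Proof.
case/existsP => al /and3P [pal xal /eqP <-].
by rewrite (dim_del Hg pal xal) (dim_gam Hg pal).
Qed.

Lemma connect_dim P (Hg : is_hgraph P) (x y : face P) : connect (@upper_step P) x y -> dim x = dim y.
Proof.
move=> H; apply: (connect_rect (Q := fun x => dim x = dim y) _ _ H) => //.
by move=> u v /(up_dim Hg) ->.
Qed.

Lemma lt_dim P (Hg : is_hgraph P) (x y : face P) : lt_upper x y -> dim x = dim y.
Proof. by move/tclos_connect; apply: connect_dim. Qed.

Lemma up_edge P (Hg : is_hgraph P) (x y : face P) : dim x = 0 -> upper_step x y ->
  exists e, [/\ dim e = 1, src e = x & gam e = y].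
Proof.
move=> Hx /existsP [al /and3P [pal xal /eqP <-]].
have Hal : dim al = 1 by move: (dim_del Hg pal xal); rewrite Hx; move: pal; clear; lia.
exists al; split => //; move: xal; by rewrite (del_src Hg Hal) inE => /eqP ->.
Qed.

Lemma step_src P (Hg : is_hgraph P) (e : face P) : dim e = 1 -> upper_step (src e) (gam e).
Proof. by move=> He; apply/existsP; exists e; rewrite src_in // He eqxx. Qed.

Lemma lt_src P (Hg : is_hgraph P) (e : face P) : dim e = 1 -> lt_upper (src e) (gam e).
Proof. by move=> He; apply: tclos1; apply: step_src. Qed.

Lemma le_refl P (x : face P) : le x x.
Proof. by rewrite /le eqxx. Qed.

Lemma lt_le_trans P (x y z : face P) : lt_upper x y -> le y z -> lt_upper x z.
Proof. by move=> Hxy /orP [/eqP <-|]; last apply: tclos_trans. Qed.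

Lemma le_lt_trans P (x y z : face P) : le x y -> lt_upper y z -> lt_upper x z.
Proof. by move=> /orP [/eqP ->|] //; apply: tclos_trans. Qed.

Lemma le_trans P (x y z : face P) : le x y -> le y z -> le x z.
Proof.
move=> /orP [/eqP ->|Hxy] // Hyz; apply/orP; right; exact: lt_le_trans Hxy Hyz.
Qed.

Lemma lt_le P (x y : face P) : lt_upper x y -> le x y.
Proof. by move=> H; rewrite /le H orbT. Qed.

Lemma connect_le P (x y : face P) : connect (@upper_step P) x y -> le x y.
Proof. by case/connect_tclos => [->|]; [apply: le_refl | apply: lt_le]. Qed.
End Basic.

Lemma L_tgt P (Hg : is_hgraph P) (Hglob : globular P) (Hstr : forall a : face P, ~~ lt_upper a a)
  (b e : face P) : 2 <= dim b -> e \in del b -> le (gam e) (gam (gam b)).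
Proof.
move=> Hb.
have [n] := ubnP #|[set z | lt_upper (gam e) z]|.
elim: n e => // n IH e Hn He.
have [Hg1 Hg2] := Hglob b Hb.
case: (eqVneq (gam e) (gam (gam b))) => [->|Hne]; first exact: le_refl.
have : gam e \in delS (del b).
  apply: contraNT Hne => Hnd.
  have : gam e \in gamS (del b) :\: delS (del b) by rewrite inE Hnd (imset_f _ He).
  by rewrite -Hg1 inE.
case/bigcupP => e' He' Hee'.
have pb : 0 < dim b by lia.
have de' : dim e' = (dim b).-1 := dim_del Hg pb He'.
have Hst : lt_upper (gam e) (gam e').
  apply: tclos1; apply/existsP; exists e'; rewrite Hee' eqxx andbT de'; lia.
apply: le_trans (lt_le Hst) (IH e' _ He').
have : [set z | lt_upper (gam e') z] \proper [set z | lt_upper (gam e) z].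
  apply/properP; split.
  - by apply/subsetP => z; rewrite !inE => Hz; exact: tclos_trans Hst Hz.
  - by exists (gam e'); rewrite !inE ?Hst // (negbTE (Hstr _)).
move/proper_card; move: Hn; lia.
Qed.

Lemma L_chain P (Hg : is_hgraph P) (Hglob : globular P) (Hstr : forall a : face P, ~~ lt_upper a a)
  (e e' : face P) : 1 <= dim e -> lt_upper e e' -> le (gam e) (gam e').
Proof.
move=> He /tclos_connect H.
apply: (connect_rect (Q := fun z => 1 <= dim z -> le (gam z) (gam e')) _ _ H He)
   => [_|u v Huv _ IHv Hu]; first exact: le_refl.
case/existsP: (Huv) => al /and3P [pal ual /eqP Hv].
have dal : dim u = (dim al).-1 := dim_del Hg pal ual.
apply: le_trans (L_tgt Hg Hglob Hstr (b:=al) _ ual) _; first lia.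
by rewrite Hv; apply: IHv; rewrite -(up_dim Hg Huv).
Qed.

Lemma antichain P (Hg : is_hgraph P) (Hstr : forall a : face P, ~~ lt_upper a a)
  (Hdisj : forall a b : face P, 0 < dim a -> dim a = dim b ->
          ~~ (perp (@lt_lower P) a b && perp (@lt_upper P) a b))
  (Hpen2 : forall x a b : face P, 0 < dim a -> 0 < dim b -> x \in del a -> x \in del b ->
          a != b -> perp (@lt_upper P) a b)
  (a x y : face P) : 0 < dim a -> x \in del a -> y \in del a -> ~~ lt_upper x y.
Proof.
move=> pa xa ya; apply/negP => /existsP [c /andP [/existsP [b /and3P [pb xb /eqP Hc]] cy]].
have Hdb : dim b = dim a.
  have := dim_del Hg pb xb; have := dim_del Hg pa xa; lia.
have U : forall z, connect (@upper_step P) z y -> forall b', 0 < dim b' -> dim b' = dim a ->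
      gam b' = z -> lt_lower b' a.
  move=> z Hz.
  apply: (connect_rect (Q := fun z => forall b', 0 < dim b' -> dim b' = dim a ->
      gam b' = z -> lt_lower b' a) _ _ Hz).
  + move=> b' pb' db' gb'; apply: tclos1.
    by rewrite /lower_step pb' db' eqxx gb' ya.
  + move=> u v Huv _ IHv b' pb' db' gb'.
    case/existsP: Huv => b'' /and3P [pb'' ub'' /eqP gb''].
    have db'' : dim b'' = dim a.
      have := dim_del Hg pb'' ub''; have := dim_gam Hg pb'; rewrite gb'; lia.
    have Hl := IHv b'' pb'' db'' gb''.
    apply: tclos_step (tclos_connect Hl).
    by rewrite /lower_step pb' db' db'' eqxx gb' ub''.
have Hl := U c cy b pb Hdb Hc.
case: (eqVneq b a) => [Eba|Nba].
- subst b.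
  have Hup : upper_step y c by apply/existsP; exists a; rewrite pa ya Hc eqxx.
  by move: (Hstr y) => /negP; apply; exact: (tclos_step Hup cy).
- have := Hdisj b a pb Hdb; rewrite /perp Hl /=.
  by have := Hpen2 x b a pb pa xb xa Nba; rewrite /perp => ->.
Qed.

Record Ax (P : hgraph) : Prop := MkAx {
  axg : is_hgraph P;
  axglob : globular P;
  axstr : forall a : face P, ~~ lt_upper a a;
  axlin : forall a b : face P, dim a = 0 -> dim b = 0 -> a != b -> perp (@lt_upper P) a b;
  axdisj : forall a b : face P, 0 < dim a -> dim a = dim b ->
          ~~ (perp (@lt_lower P) a b && perp (@lt_upper P) a b);
  axpen1 : forall x a b : face P, 0 < dim a -> 0 < dim b -> gam a = x -> gam b = x ->
          a != b -> perp (@lt_upper P) a b;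
  axpen2 : forall x a b : face P, 0 < dim a -> 0 < dim b -> x \in del a -> x \in del b ->
          a != b -> perp (@lt_upper P) a b }.

Lemma Ax_of P : is_pos_opetopic_cardinal P -> Ax P.
Proof.
by case=> Hg [_ [Hglob [Hstr Hlin Hdisj [Hp1 Hp2]]]]; constructor.
Qed.

Lemma src_inj P (A : Ax P) (q : face P) : dim q = 2 -> {in del q &, injective (@src P)}.
Proof.
move=> Hq e e' He He' Es.
have pq : 0 < dim q by rewrite Hq.
have de := dim_del (axg A) pq He; have de' := dim_del (axg A) pq He'; rewrite Hq /= in de de'.
case: (eqVneq e e') => // Ne; exfalso.
have H1 := src_in (axg A) de.
have H2 : src e \in del e' by rewrite Es; exact: (src_in (axg A) de').
have := axpen2 A (x := src e) (a := e) (b := e'); rewrite de de' => /(_ isT isT H1 H2 Ne) /orP [].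
- by apply/negP; apply: (antichain (axg A) (axstr A) (axdisj A) (axpen2 A) pq).
- by apply/negP; apply: (antichain (axg A) (axstr A) (axdisj A) (axpen2 A) pq).
Qed.

Lemma gam_inj P (A : Ax P) (q : face P) : dim q = 2 -> {in del q &, injective (@gam P)}.
Proof.
move=> Hq e e' He He' Es.
have pq : 0 < dim q by rewrite Hq.
have de := dim_del (axg A) pq He; have de' := dim_del (axg A) pq He'; rewrite Hq /= in de de'.
case: (eqVneq e e') => // Ne; exfalso.
have := axpen1 A (x := gam e) (a := e) (b := e'); rewrite de de' => /(_ isT isT erefl (esym Es) Ne).
case/orP.
- by apply/negP; apply: (antichain (axg A) (axstr A) (axdisj A) (axpen2 A) pq).
- by apply/negP; apply: (antichain (axg A) (axstr A) (axdisj A) (axpen2 A) pq).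
Qed.

Lemma count_cross P (A : Ax P) (c : pred (face P))
  (mono : forall e, dim e = 1 -> c (gam e) -> c (src e)) (q : face P) : dim q = 2 ->
  #|[set e in del q | ~~ c (gam e) && c (src e)]| + c (gam (gam q)) = c (src (gam q)).
Proof.
move=> Hq.
have Hg := axg A.
have pq : 0 < dim q by rewrite Hq.
have dE : forall e, e \in del q -> dim e = 1.
  by move=> e He; rewrite (dim_del Hg pq He) Hq.
have Hq2 : 2 <= dim q by rewrite Hq.
have [Hg1 Hg2] := axglob A Hq2.
have dgq : dim (gam q) = 1 by rewrite (dim_gam Hg pq) Hq.
rewrite (del_src Hg dgq) in Hg2.
have monoq := mono _ dgq.
move: Hg1 Hg2 monoq.
set E := del q; set u := src (gam q); set v := gam (gam q) => Hg1 Hg2 monoq.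
have memD : forall x, reflect (exists2 e, e \in E & x = src e) (x \in delS E).
  move=> x; apply: (iffP bigcupP) => [[e He]|[e He ->]].
  - by rewrite (del_src Hg (dE e He)) inE => /eqP ->; exists e.
  - by exists e => //; exact: (src_in Hg (dE e He)).
set Es := [set e in E | c (src e)]; set Et := [set e in E | c (gam e)].
have EcE : [set e in E | ~~ c (gam e) && c (src e)] = Es :\: Et.
  by apply/setP => e; rewrite !inE; case: (e \in E).
have sub : Et \subset Es.
  by apply/subsetP => e; rewrite !inE => /andP [He Hc]; rewrite He mono // dE.
have cardEc : #|Es :\: Et| = #|Es| - #|Et| by rewrite cardsD (setIidPr sub).
have cardEs : #|Es| = #|[set x in delS E | c x]|.
  rewrite -(card_in_imset (f := @src P) (D := Es)).
    apply: eq_card => x; rewrite inE; apply/imsetP/andP => [[e]|[]].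
    - by rewrite inE => /andP [He Hce] ->; split => //; apply/memD; exists e.
    - by move=> /memD [e He ->] Hce; exists e => //; rewrite inE He Hce.
  move=> e e'; rewrite !inE => /andP [He _] /andP [He' _].
  exact: (src_inj A Hq).
have cardEt : #|Et| = #|[set x in gamS E | c x]|.
  rewrite -(card_in_imset (f := @gam P) (D := Et)).
    apply: eq_card => x; rewrite inE; apply/imsetP/andP => [[e]|[]].
    - by rewrite inE => /andP [He Hce] ->; split => //; apply: imset_f.
    - by move=> /imsetP [e He ->] Hce; exists e => //; rewrite inE He Hce.
  move=> e e'; rewrite !inE => /andP [He _] /andP [He' _].
  exact: (gam_inj A Hq).
have H2x : forall x, (x \in delS E) && (x \notin gamS E) = (x == u).
  by move=> x; move/setP: Hg2 => /(_ x); rewrite !inE andbC.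
have H1x : forall x, (x \in gamS E) && (x \notin delS E) = (x == v).
  by move=> x; move/setP: Hg1 => /(_ x); rewrite !inE andbC.
have cardD : #|[set x in delS E | c x]| = c u + #|[set x in delS E :&: gamS E | c x]|.
  rewrite (cardsD1 u); congr (_ + _).
  - by rewrite !inE; have := H2x u; rewrite eqxx => /andP [->].
  - apply: eq_card => x; rewrite !inE.
    have := H2x x; case: (x =P u) => [->|nx].
    + by case/andP => _ /negbTE ->; rewrite andbF.
    + by case: (x \in delS E); case: (x \in gamS E).
have cardG : #|[set x in gamS E | c x]| = c v + #|[set x in delS E :&: gamS E | c x]|.
  rewrite (cardsD1 v); congr (_ + _).
  - by rewrite !inE; have := H1x v; rewrite eqxx => /andP [->].
  - apply: eq_card => x; rewrite !inE.
    have := H1x x; case: (x =P v) => [->|nx].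
    + by case/andP => _ /negbTE ->.
    + by case: (x \in delS E); case: (x \in gamS E).
rewrite EcE cardEc cardEs cardEt cardD cardG.
move: monoq; case: (c u); case: (c v) => //= H; try lia.

Qed.

Lemma dim_iter P (Hg : is_hgraph P) n (p : face P) :
  n <= dim p -> dim (iter n (@gam P) p) = dim p - n.
Proof.
elim: n p => [|n IH] p H; first by rewrite subn0.
have pp : 0 < dim p by lia.
have dg := dim_gam Hg pp.
rewrite iterSr IH; rewrite dg -subn1; move: H; clear; lia.
Qed.

Lemma gamk1_dim P (Hg : is_hgraph P) (p : face P) : 0 < dim p -> dim (gamk 1 p) = 1.
Proof. by move=> H; rewrite /gamk (dim_iter Hg); lia. Qed.

Lemma gamk1_gam P (Hg : is_hgraph P) (p : face P) : 2 <= dim p -> gamk 1 (gam p) = gamk 1 p.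
Proof.
move=> H; rewrite /gamk (dim_gam Hg); last lia.
have -> : dim p - 1 = (dim p - 2).+1 by lia.
rewrite iterSr; congr iter; lia.
Qed.

Lemma gamk1_1 P (p : face P) : dim p = 1 -> gamk 1 p = p.
Proof. by move=> H; rewrite /gamk H. Qed.

Lemma gamk_succ P k (q : face P) : dim q = k.+1 -> gamk k q = gam q.
Proof. by move=> H; rewrite /gamk H subSnn. Qed.

Definition Hmap P (c : pred (face P)) (p : face P) : face Ihg :=
  if dim p == 0 then (if c p then Iminus else Iplus)
  else let b := gamk 1 p in
       if ~~ c (gam b) && c (src b) then Ia else if c (gam b) then Iminus else Iplus.

Lemma Hmap_edge P (c : pred (face P)) (e : face P) : dim e = 1 ->
  Hmap c e = if ~~ c (gam e) && c (src e) then Ia else if c (gam e) then Iminus else Iplus.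
Proof. by move=> He; rewrite /Hmap He gamk1_1. Qed.

Lemma Hmap_vert P (c : pred (face P)) (x : face P) : dim x = 0 ->
  Hmap c x = if c x then Iminus else Iplus.
Proof. by move=> Hx; rewrite /Hmap Hx. Qed.

Lemma Hmap_pos P (Hg : is_hgraph P) (c : pred (face P)) (p : face P) : 0 < dim p ->
  Hmap c p = Hmap c (gamk 1 p).
Proof.
move=> Hp; rewrite (Hmap_edge _ (gamk1_dim Hg Hp)) /Hmap.
by case: (dim p) Hp.
Qed.

Lemma Hmap_edgeIa P (c : pred (face P)) (e : face P) : dim e = 1 ->
  (Hmap c e == Ia) = ~~ c (gam e) && c (src e).
Proof.
move=> He; rewrite Hmap_edge //.
by case: (~~ c (gam e) && c (src e)); rewrite ?eqxx //; case: (c (gam e)); rewrite ?Ima ?Ipa.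
Qed.

Lemma Hmap_iota P (A : Ax P) (c : pred (face P))
  (mono : forall e, dim e = 1 -> c (gam e) -> c (src e)) : is_iota_map (Hmap c).
Proof.
have Hg := axg A.
split.
- move=> q; case: (posnP (dim q)) => [H0|Hp].
  + by rewrite Hmap_vert // H0 /= /Idim; case: (c q); rewrite ?Ima ?Ipa.
  + exact: leq_trans (Idim_le1 _) Hp.
- move=> k q Hq; rewrite (gamk_succ Hq) gamkI; case: k Hq => [|k] Hq.
  + rewrite Hmap_vert ?(dim_gam1 Hg Hq) // Hmap_edge //.
    by case: (c (gam q)); case: (c (src q)); rewrite /= ?eqxx ?Ima ?Ipa.
  + rewrite /=; rewrite /Hmap Hq (dim_gam Hg) ?Hq // gamk1_gam ?Hq //.
- move=> k q Hq.
  have Hle : forall x : face P, dim (Hmap c x) <= 1 by move=> x; apply: Idim_le1.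
  case: k Hq => [|[|k]] Hq.
  +
    have Hker : del q :\: ker (Hmap c) = [set src q].
      rewrite (del_src Hg Hq); apply/setP => x; rewrite !inE.
      case: (x =P src q) => [->|] /=; last by rewrite andbF.
      by rewrite (dim_src Hg Hq) ltn0.
    have Hw := Hmap_vert c (dim_src Hg Hq).
    have Hmq := Hmap_edge c Hq.
    have Hm := mono _ Hq.
    rewrite Hker; split.
    * move=> Hd; split; first by move=> x y /set1P -> /set1P ->.
      move: Hd; rewrite imset_set1 /= /Idim Hw Hmq.
      case Hcr: (~~ c (gam q) && c (src q)); last by case: (c (gam q)); rewrite ?Ima ?Ipa.
      by move: Hcr => /andP [_ ->] _; rewrite /Idel eqxx.
    * move=> Hd; split; first by move=> x y /set1P -> /set1P ->.
      move: Hd; rewrite imset_set1 /= /Idim Hw Hmq.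
      case Hcr: (~~ c (gam q) && c (src q)); first by rewrite eqxx.
      move=> _; move: Hcr Hm; case: (c (gam q)); case: (c (src q)) => //= _ H.
      by have := H isT.
    * by [].
  +
    have pq : 0 < dim q by rewrite Hq.
    have dE : forall e, e \in del q -> dim e = 1.
      by move=> e He; rewrite (dim_del Hg pq He) Hq.
    have dgq : dim (gam q) = 1 by rewrite (dim_gam Hg pq) Hq.
    have Hker : del q :\: ker (Hmap c) = [set e in del q | ~~ c (gam e) && c (src e)].
      apply/setP => e; rewrite !inE; case He: (e \in del q); rewrite ?andbF ?andbT //=.
      rewrite (dE e He) -(Hmap_edgeIa c (dE e He)) /= /Idim.
      by case: (Hmap c e == Ia).
    have Hcnt := count_cross A mono Hq.
    have Hhq : Hmap c q = Hmap c (gam q).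
      by rewrite (Hmap_pos Hg c pq) (gamk_succ (k := 1) Hq).
    have HqIa : (Hmap c q == Ia) = ~~ c (gam (gam q)) && c (src (gam q)).
      by rewrite Hhq Hmap_edgeIa.
    have Hm := mono _ dgq.
    rewrite Hker; split.
    * by move=> Hd; have := Hle q; rewrite Hd.
    * move=> Hd; have HIa : Hmap c q == Ia by move: Hd; rewrite /= /Idim; case: (_ == _).
      have := Hcnt; move: (HIa); rewrite HqIa => /andP [/negbTE -> ->] /= /eqP.
      rewrite addn0 => /cards1P [e0 He0]; rewrite He0; split.
      - by move=> x y /set1P -> /set1P ->.
      - have : e0 \in [set e in del q | ~~ c (gam e) && c (src e)] by rewrite He0 set11.
        rewrite inE => /andP [He0q Hcr].
        rewrite imset_set1 (eqP HIa); congr [set _]; apply/eqP.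
        by rewrite Hmap_edgeIa ?dE.
    * move=> Hd; have HnIa : Hmap c q != Ia by move: Hd; rewrite /= /Idim; case: (_ == _).
      have Hc0 : #|[set e in del q | ~~ c (gam e) && c (src e)]| = 0.
        move: HnIa Hcnt Hm; rewrite HqIa.
        case: (c (gam (gam q))); case: (c (src (gam q))) => //= H0 H1 H2; lia.
      apply/subsetP => e He.
      have Hnc : ~~ (~~ c (gam e) && c (src e)).
        apply/negP => Hcr.
        have : e \in [set e in del q | ~~ c (gam e) && c (src e)] by rewrite inE He Hcr.
        by rewrite (cards0_eq Hc0) inE.
      by rewrite inE (dE e He) /= /Idim (Hmap_edgeIa c (dE e He)) (negbTE Hnc).
  + have Hl := Hle q; split.
    * by move=> Hd; move: Hl; rewrite Hd.
    * by move=> Hd; move: Hl; rewrite Hd.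
    * move=> _; apply/subsetP => e He; rewrite inE (dim_del Hg _ He) ?Hq //=.
      exact: leq_ltn_trans (Hle e) _.
Qed.

Lemma Ipm : (Iplus == Iminus) = false. Proof. by rewrite eq_sym Imp. Qed.

Lemma iota_vert P (h : face P -> face Ihg) (Hh : is_iota_map h) (x : face P) :
  dim x = 0 -> h x != Ia.
Proof. by case: Hh => Hd _ _ Hx; have := Hd x; rewrite Hx /= /Idim; case: (h x == Ia). Qed.

Lemma iota_vert2 P (h : face P -> face Ihg) (Hh : is_iota_map h) (x : face P) :
  dim x = 0 -> h x = Iminus \/ h x = Iplus.
Proof.
move=> Hx; have := iota_vert Hh Hx.
by case: (Icases (h x)) => ->; [left|right|rewrite eqxx].
Qed.

Lemma iota_edge P (Hg : is_hgraph P) (h : face P -> face Ihg) (Hh : is_iota_map h) (e : face P) :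
  dim e = 1 ->
  (h e = Ia -> h (src e) = Iminus /\ h (gam e) = Iplus) /\
  (h e != Ia -> h (src e) = h e /\ h (gam e) = h e).
Proof.
move=> He; case: Hh => Hd Hgk Hdl.
have Hgam := Hgk 0 e He; rewrite (gamk_succ He) gamkI /= in Hgam.
have [D1 D2 _] := Hdl 0 e He.
have Hker : del e :\: ker h = [set src e].
  rewrite (del_src Hg He); apply/setP => x; rewrite !inE.
  case: (x =P src e) => [->|] /=; last by rewrite andbF.
  by rewrite (dim_src Hg He) ltn0.
split.
- move=> HIa; rewrite HIa eqxx in Hgam; split => //.
  have := D1; rewrite HIa /= /Idim eqxx => /(_ erefl) [_].
  by rewrite Hker imset_set1 /Idel eqxx => /set1_inj.
- move=> HnIa; rewrite (negbTE HnIa) in Hgam; split => //.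
  have := D2; rewrite /= /Idim (negbTE HnIa) => /(_ erefl) [_].
  by rewrite Hker imset_set1 => /set1_inj.
Qed.

Lemma iota_gam2 P (h : face P -> face Ihg) (Hh : is_iota_map h) (p : face P) :
  2 <= dim p -> h (gam p) = h p.
Proof.
move=> Hp; case: Hh => _ Hgk _.
have Hq : dim p = (dim p).-1.+1 by rewrite prednK //; lia.
have := Hgk _ _ Hq; rewrite (gamk_succ Hq) gamkI.
by have -> : ((dim p).-1 == 0) = false by apply/eqP; lia.
Qed.

Lemma iota_iter P (Hg : is_hgraph P) (h : face P -> face Ihg) (Hh : is_iota_map h) n (p : face P) :
  n < dim p -> h (iter n (@gam P) p) = h p.
Proof.
elim: n p => [|n IH] p Hn //.
have pp : 0 < dim p by lia.
rewrite iterSr IH; first by apply: iota_gam2 => //; lia.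
by rewrite (dim_gam Hg pp); lia.
Qed.

Lemma iota_gamk1 P (Hg : is_hgraph P) (h : face P -> face Ihg) (Hh : is_iota_map h) (p : face P) :
  0 < dim p -> h (gamk 1 p) = h p.
Proof. by move=> Hp; rewrite /gamk (iota_iter Hg Hh) //; lia. Qed.

Lemma iota_Hmap P (Hg : is_hgraph P) (h : face P -> face Ihg) (Hh : is_iota_map h) (p : face P) :
  h p = Hmap (fun x => h x == Iminus) p.
Proof.
case: (posnP (dim p)) => [H0|Hp].
- rewrite Hmap_vert //; case: (iota_vert2 Hh H0) => ->; by rewrite ?eqxx ?Ipm.
- rewrite (Hmap_pos Hg _ Hp) -(iota_gamk1 Hg Hh Hp).
  have Hb := gamk1_dim Hg Hp.
  move: Hb; set b := gamk 1 p => Hb.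
  rewrite Hmap_edge //; have [E1 E2] := iota_edge Hg Hh Hb.
  case: (eqVneq (h b) Ia) => [HIa|HnIa].
  + by have [-> ->] := E1 HIa; rewrite HIa Ipm eqxx.
  + have [-> ->] := E2 HnIa; move: HnIa.
    by case: (Icases (h b)) => ->; rewrite ?eqxx ?Ipm.
Qed.

Lemma iota_mono_minus P (Hg : is_hgraph P) (h : face P -> face Ihg) (Hh : is_iota_map h)
  (x y : face P) : dim y = 0 -> le x y -> h y = Iminus -> h x = Iminus.
Proof.
move=> Hy /orP [/eqP -> //|/tclos_connect H] Hhy.
apply: (connect_rect (Q := fun x => h x = Iminus) Hhy _ H) => u v Huv Hvy IHv.
have Hv : dim v = 0 by rewrite (connect_dim Hg Hvy).
have Hu : dim u = 0 by rewrite (up_dim Hg Huv).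
have [e [He Hs Hg']] := up_edge Hg Hu Huv.
have [E1 E2] := iota_edge Hg Hh He.
case: (eqVneq (h e) Ia) => [HIa|HnIa].
- by rewrite -Hs; case: (E1 HIa).
- by have [Hs' Hg''] := E2 HnIa; rewrite -Hs Hs' -Hg'' Hg'.
Qed.

Lemma iota_mono_plus P (Hg : is_hgraph P) (h : face P -> face Ihg) (Hh : is_iota_map h)
  (x y : face P) : dim x = 0 -> le x y -> h x = Iplus -> h y = Iplus.
Proof.
move=> Hx Hle Hhx.
have Hy : dim y = 0.
  by case/orP: Hle => [/eqP <-|/(lt_dim Hg) <-].
case: (Icases (h y)) => // H.
- by have := iota_mono_minus Hg Hh Hy Hle H; rewrite Hhx => /eqP; rewrite Ipm.
- by have := iota_vert Hh Hy; rewrite H eqxx.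
Qed.

Lemma top1_dim P (a : face P) : a \in top1faces P -> dim a = 1.
Proof. by rewrite /top1faces !inE => /andP [_ /eqP]. Qed.

Lemma not_lt_top P (Hg : is_hgraph P) (a b : face P) : a \in top1faces P -> ~~ lt_upper b a.
Proof.
move=> Ha; apply/negP => /tclos_last [z /existsP [al /and3P [pal zal /eqP Hal]]].
have Hd := top1_dim Ha.
have Hd2 : dim al = 2 by have := dim_gam Hg pal; rewrite Hal Hd; lia.
move: Ha; rewrite /top1faces inE => /andP [/negP []].
by rewrite -Hal; apply: imset_f; rewrite inE Hd2.
Qed.

Lemma lin_cases P (A : Ax P) (x y : face P) : dim x = 0 -> dim y = 0 ->
  [\/ x = y, lt_upper x y | lt_upper y x].
Proof.
move=> Hx Hy; case: (eqVneq x y) => [->|N]; first by constructor 1.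
by case/orP: (axlin A Hx Hy N) => H; [constructor 2|constructor 3].
Qed.

Lemma N3 P (A : Ax P) (a v : face P) : a \in top1faces P ->
  lt_upper (src a) v -> lt_upper v (gam a) -> False.
Proof.
have Hg := axg A.
move=> Ha /existsP [c /andP [Hsc Hcv]] Hvt.
have Hd := top1_dim Ha.
have [b [Hb Hsb Hgb]] := up_edge Hg (dim_src Hg Hd) Hsc.
have Hcv' := connect_le Hcv.
have Hstr := axstr A.
case: (eqVneq b a) => [Eba|Nba].
- subst b; move: (Hstr (gam a)) => /negP; apply.
  by apply: le_lt_trans Hvt; rewrite Hgb.
- have H1 : src a \in del b by rewrite -Hsb; apply: src_in.
  have := axpen2 A (x := src a) (a := b) (b := a); rewrite Hb Hd.
  move=> /(_ isT isT H1 (src_in Hg Hd) Nba) /orP [].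
  + by apply/negP; apply: not_lt_top.
  + move=> /(L_chain Hg (axglob A) Hstr); rewrite Hd => /(_ isT) Hab.
    move: (Hstr (gam a)) => /negP; apply.
    by apply: le_lt_trans Hvt; apply: le_trans Hab _; rewrite Hgb.
Qed.

Lemma I3_unique P (A : Ax P) (h : face P -> face Ihg) (Hh : is_iota_map h) (a a' : face P) :
  a \in top1faces P -> a' \in top1faces P -> h a = Ia -> h a' = Ia -> a = a'.
Proof.
have Hg := axg A.
have K : forall a a', a \in top1faces P -> a' \in top1faces P -> h a = Ia -> h a' = Ia ->
    ~~ lt_upper (src a) (src a').
  move=> b b' Hb Hb' Hhb Hhb'; apply/negP => Hlt.
  have Db := top1_dim Hb; have Db' := top1_dim Hb'.
  have [Eb1 Eb2] := (iota_edge Hg Hh Db).1 Hhb.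
  have [Eb1' Eb2'] := (iota_edge Hg Hh Db').1 Hhb'.
  case: (lin_cases A (dim_src Hg Db') (dim_gam1 Hg Db)) => [E|L|L].
  - by move: Eb1'; rewrite E Eb2 => /eqP; rewrite Ipm.
  - exact: (N3 A Hb Hlt L).
  - have := iota_mono_plus Hg Hh (dim_gam1 Hg Db) (lt_le L) Eb2.
    by rewrite Eb1' => /eqP; rewrite Imp.
move=> Ha Ha' Hha Hha'.
have Da := top1_dim Ha; have Da' := top1_dim Ha'.
case: (lin_cases A (dim_src Hg Da) (dim_src Hg Da')) => [E|L|L].
- case: (eqVneq a a') => // N; exfalso.
  have H2 : src a \in del a' by rewrite E; apply: src_in.
  have := axpen2 A (x := src a) (a := a) (b := a'); rewrite Da Da'.
  move=> /(_ isT isT (src_in Hg Da) H2 N) /orP [].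
  + by apply/negP; apply: not_lt_top.
  + by apply/negP; apply: not_lt_top.
- by have := K a a' Ha Ha' Hha Hha'; rewrite L.
- by have := K a' a Ha' Ha Hha' Hha; rewrite L.
Qed.

Lemma I3_exists P (A : Ax P) (h : face P -> face Ihg) (Hh : is_iota_map h) (p : face P) :
  h p = Ia -> exists a, (a \in top1faces P) && (h a == Ia).
Proof.
have Hg := axg A.
move=> Hp.
have pp : 0 < dim p.
  by case: (posnP (dim p)) => // H0; have := iota_vert Hh H0; rewrite Hp eqxx.
have Hb := gamk1_dim Hg pp.
have Hhb : h (gamk 1 p) = Ia by rewrite (iota_gamk1 Hg Hh pp).
move: Hb Hhb; set e := gamk 1 p; clearbody e.
have [n] := ubnP #|[set z | lt_upper z e]|.
elim: n e => // n IH e Hn He HIa.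
case Htop: (e \in gamS (faces_of P 2)).
- case/imsetP: Htop => b Hb Eb; rewrite inE in Hb.
  have Hb2 : dim b = 2 by apply/eqP.
  have hb : h b = Ia by rewrite -(iota_gam2 Hh (p := b)) ?Hb2 // -Eb.
  case: Hh => Hd Hgk Hdl.
  have [_ D2 _] := Hdl 1 b Hb2.
  have Hd1 : dim (h b) = 1 by rewrite hb /= /Idim eqxx.
  have [_ Himg] := D2 Hd1.
  have : Ia \in [set h x | x in del b :\: ker h] by rewrite Himg hb set11.
  case/imsetP => e' /setDP [He' _] Ee'.
  have pb : 0 < dim b by rewrite Hb2.
  have De' : dim e' = 1 by rewrite (dim_del Hg pb He') Hb2.
  have Hst : lt_upper e' e.
    by apply: tclos1; apply/existsP; exists b; rewrite pb He' Eb eqxx.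
  have Hpr : [set z | lt_upper z e'] \proper [set z | lt_upper z e].
    apply/properP; split.
    + by apply/subsetP => z; rewrite !inE => Hz; exact: tclos_trans Hz Hst.
    + by exists e'; rewrite !inE ?Hst // (negbTE (axstr A _)).
  have Hc : #|[set z | lt_upper z e']| < n by move/proper_card: Hpr; move: Hn; clear; lia.
  exact: (IH e' Hc De' (esym Ee')).
- exists e; rewrite /top1faces !inE He Htop eqxx /=.
  by rewrite HIa.
Qed.

Lemma I4 P (A : Ax P) (h : face P -> face Ihg) (Hh : is_iota_map h) (a : face P) :
  a \in top1faces P -> h a = Ia -> forall x, dim x = 0 -> le x (src a) = (h x == Iminus).
Proof.
have Hg := axg A.
move=> Ha HIa x Hx.
have Da := top1_dim Ha.
have [Es Et] := (iota_edge Hg Hh Da).1 HIa.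
case Hle: (le x (src a)).
- by rewrite (iota_mono_minus Hg Hh (dim_src Hg Da) Hle Es) eqxx.
- suff -> : h x = Iplus by rewrite Ipm.
  case: (lin_cases A Hx (dim_src Hg Da)) => [E|L|L].
  + by rewrite E le_refl in Hle.
  + by rewrite lt_le in Hle.
  + case: (lin_cases A Hx (dim_gam1 Hg Da)) => [E'|L'|L'].
    * by rewrite E'.
    * by case: (N3 A Ha L L').
    * by have := iota_mono_plus Hg Hh (dim_gam1 Hg Da) (lt_le L') Et.
Qed.

Lemma Hmap_ext P (Hg : is_hgraph P) (c c' : pred (face P)) (p : face P) :
  (forall x, dim x = 0 -> c x = c' x) -> Hmap c p = Hmap c' p.
Proof.
move=> Hc; rewrite /Hmap; case Hp: (dim p == 0); first by rewrite Hc //; apply/eqP.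
have pp : 0 < dim p by rewrite lt0n Hp.
have Hb := gamk1_dim Hg pp.
by rewrite !Hc ?(dim_gam1 Hg Hb) ?(dim_src Hg Hb).
Qed.

Definition ca P (a : face P) : pred (face P) := fun x => le x (src a).

Lemma ca_mono P (Hg : is_hgraph P) (a : face P) :
  forall e, dim e = 1 -> ca a (gam e) -> ca a (src e).
Proof. by move=> e He; rewrite /ca => H; apply: le_trans (lt_le (lt_src Hg He)) H. Qed.

Lemma g_ok P (A : Ax P) (a : face P) : a \in top1faces P ->
  is_iota_map [ffun p => Hmap (ca a) p] /\ (forall y, exists x, [ffun p => Hmap (ca a) p] x = y).
Proof.
have Hg := axg A.
move=> Ha; have Da := top1_dim Ha.
have E : fun_of_fin [ffun p => Hmap (ca a) p] = Hmap (ca a).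
  by apply: functional_extensionality => p; rewrite ffunE.
have Hct : ca a (gam a) = false.
  apply/negP => H; move: (axstr A (src a)) => /negP; apply.
  exact: lt_le_trans (lt_src Hg Da) H.
rewrite E; split; first by have := Hmap_iota A (@ca_mono P Hg a).
move=> y; case: (Icases y) => ->.
- by exists (src a); rewrite Hmap_vert ?(dim_src Hg Da) // /ca le_refl.
- by exists (gam a); rewrite Hmap_vert ?(dim_gam1 Hg Da) // Hct.
- by exists a; rewrite Hmap_edge // Hct /ca le_refl.
Qed.

Theorem mainTheorem6 (P : hgraph) (HP : is_pos_opetope P) :
  exists f : {h : {ffun face P -> face Ihg} |
                is_iota_map h /\ (forall y : face Ihg, exists x, h x = y)} ->
             {a : face P | a \in top1faces P},
    bijective f.
Proof.
have A := Ax_of HP.1.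
have Hg := axg A.
pose Dom := {h : {ffun face P -> face Ihg} |
                is_iota_map h /\ (forall y : face Ihg, exists x, h x = y)}.
have exP : forall H : Dom, exists a, (a \in top1faces P) && (sval H a == Ia).
  move=> [h [Hh Hs]] /=; have [p Hp] := Hs Ia; by have := I3_exists A Hh Hp.
pose f := fun H : Dom => let w := sigW (exP H) in
  exist (fun a => a \in top1faces P) (sval w) (proj1 (andP (svalP w))).
exists f.
pose g := fun A0 : {a : face P | a \in top1faces P} =>
  (exist (fun h : {ffun face P -> face Ihg} =>
     is_iota_map h /\ (forall y : face Ihg, exists x, h x = y))
     [ffun p => Hmap (ca (sval A0)) p] (g_ok A (svalP A0)) : Dom).
exists g.
- move=> [h [Hh Hs]]; apply: sig_eqP => /=.
  rewrite /f /=; case: (sigW _) => a /= /andP [Ha HIa].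
  apply/ffunP => p; rewrite ffunE (iota_Hmap Hg Hh p).
  apply: Hmap_ext => // x Hx.
  by rewrite /ca (I4 A Hh Ha (eqP HIa) Hx).
- move=> [a Ha]; apply: val_inj => /=.
  rewrite /f /=; case: (sigW _) => a' /= /andP [Ha' HIa'].
  have [Hh _] := g_ok A Ha.
  apply: (I3_unique A Hh Ha' Ha).
  + by apply/eqP.
  + have Da := top1_dim Ha.
    rewrite ffunE Hmap_edge //.
    have -> : ca a (gam a) = false.
      apply/negP => H; move: (axstr A (src a)) => /negP; apply.
      exact: lt_le_trans (lt_src Hg Da) H.
    by rewrite /ca le_refl.
Qed.
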